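(* Let $N\ge2$ and ${\bm{p}}\in\Delta_K$ with $p_1\ge p_2\ge\dots\ge p_K>0$. Let ${\bm{q}}^*(N)$ be the minimizer over ${\bm{q}}\in\Delta_K$ of $\sum_kp_k(1-q_k)^N$, let $\beta_N>0$ be such that $q_k^*(N)=\max\{0,1-\beta_Np_k^{-1/(N-1)}\}$ for all $k$, and let $K_N:=\max\{k\in[K]:q_k^*(N)\neq0\}$. Then $$\beta_N=\frac{K_N-1}{\sum_{k=1}^{K_N}p_k^{-1/(N-1)}}\in\left[p_{K_N+1}^{1/(N-1)},\,p_{K_N}^{1/(N-1)}\right),$$ $$K_N=\max\{l\mid f_N(l)<1\},\quad\text{where } f_N(l):=\sum_{k=1}^{l-1}\left(1-\left(\frac{p_l}{p_k}\right)^{1/(N-1)}\right),$$ with the convention $p_{K+1}=0$.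
   Context: $\Delta_K=\{{\bm{r}}\in\mathbb{R}^K:{\bm{r}}\ge0,\ \sum_kr_k=1\}$. The objective is the expected test loss of the memorization model. *)

(* Defs.v *)
From HB Require Import structures.
From mathcomp Require Import all_boot all_order all_algebra.
From mathcomp Require Import all_classical all_reals all_analysis.
Set Implicit Arguments. Unset Strict Implicit. Unset Printing Implicit Defensive.
Import Order.TTheory GRing.Theory Num.Theory.
Local Open Scope ring_scope.

(* Vectors in R^K are functions nat -> R, only indices 1..K are meaningful. *)

Definition in_simplex {R : realType} (K : nat) (r : nat -> R) : Prop :=
  (forall k, (1 <= k <= K)%N -> 0 <= r k) /\ \sum_(1 <= k < K.+1) r k = 1.

Definition loss {R : realType} (N K : nat) (p q : nat -> R) : R :=
  \sum_(1 <= k < K.+1) p k * (1 - q k) ^+ N.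

Definition is_minimizer {R : realType} (N K : nat) (p q : nat -> R) : Prop :=
  in_simplex K q /\ forall r, in_simplex K r -> loss N K p q <= loss N K p r.

Definition pext {R : realType} (K : nat) (p : nat -> R) (k : nat) : R :=
  if (k <= K)%N then p k else 0.

Definition KN {R : realType} (K : nat) (q : nat -> R) : nat :=
  \max_(1 <= k < K.+1 | q k != 0) k.

Definition fN {R : realType} (N : nat) (p : nat -> R) (l : nat) : R :=
  \sum_(1 <= k < l) (1 - (p l / p k) `^ ((N.-1)%:R^-1)).

Definition maxl_fN {R : realType} (N K : nat) (p : nat -> R) : nat :=
  \max_(1 <= l < K.+1 | fN N p l < 1) l.

(* Main.v *)
Require Import Defs.
From HB Require Import structures.
From mathcomp Require Import all_boot all_order all_algebra.
From mathcomp Require Import all_classical all_reals all_analysis.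
From mathcomp Require Import lra.
Import Order.TTheory GRing.Theory Num.Theory.
Local Open Scope ring_scope.

Lemma maxP_seq (r : seq nat) (P : pred nat) :
  (\max_(i <- r | P i) i = 0)%N \/
  ((\max_(i <- r | P i) i) \in r /\ P (\max_(i <- r | P i) i)).
Proof.
elim: r => [|x r IH]; first by rewrite big_nil; left.
rewrite big_cons; case: ifP => Px; last first.
  by case: IH => [->|[H1 H2]]; [left|right; rewrite inE H1 orbT].
set M := \max_(i <- r | P i) i in IH *.
rewrite /maxn; case: ifP => hxM.
  case: IH => [hM|[H1 H2]]; first by rewrite hM in hxM.
  by right; rewrite inE H1 orbT.
by right; rewrite inE eqxx.
Qed.

Lemma max_attain (K : nat) (P : pred nat) i0 :
  (1 <= i0 <= K)%N -> P i0 ->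
  let m := \max_(1 <= k < K.+1 | P k) k in
  [/\ (1 <= m <= K)%N, P m & forall i, (1 <= i <= K)%N -> P i -> (i <= m)%N].
Proof.
move=> hi0 Pi0 m.
have ub : forall i, (1 <= i <= K)%N -> P i -> (i <= m)%N.
  move=> i hi Pi; apply: (@leq_bigmax_seq _ _ P (fun k => k)) => //.
  by rewrite mem_index_iota ltnS.
have hm0 : (m != 0)%N.
  apply/negP => /eqP h; have := ub _ hi0 Pi0; rewrite h leqn0 => /eqP hi.
  by rewrite hi in hi0.
case: (maxP_seq (index_iota 1 K.+1) P) => [h|[H1 H2]]; first by rewrite /m h in hm0.
by rewrite mem_index_iota ltnS in H1; split.
Qed.

Lemma max_char (K : nat) (P : pred nat) m :
  (1 <= m <= K)%N -> P m -> (forall i, (1 <= i <= K)%N -> P i -> (i <= m)%N) ->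
  \max_(1 <= k < K.+1 | P k) k = m.
Proof.
move=> hm Pm ub; apply/eqP; rewrite eqn_leq; apply/andP; split.
  apply/bigmax_leqP_seq => i; rewrite mem_index_iota ltnS => hi Pi; exact: ub.
by apply: (@leq_bigmax_seq _ _ P (fun k => k)) => //; rewrite mem_index_iota ltnS.
Qed.

Theorem lemmaA7 (R : realType) (N K : nat) (p q : nat -> R) (beta : R) :
  (2 <= N)%N ->
  in_simplex K p ->
  (forall k, (1 <= k < K)%N -> p k.+1 <= p k) ->
  (forall k, (1 <= k <= K)%N -> 0 < p k) ->
  is_minimizer N K p q ->
  0 < beta ->
  (forall k, (1 <= k <= K)%N ->
     q k = Num.max 0 (1 - beta * p k `^ (- (N.-1)%:R^-1))) ->
  [/\ beta = (KN K q).-1%:R / \sum_(1 <= k < (KN K q).+1) p k `^ (- (N.-1)%:R^-1),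
      pext K p (KN K q).+1 `^ ((N.-1)%:R^-1) <= beta,
      beta < p (KN K q) `^ ((N.-1)%:R^-1)
    & KN K q = maxl_fN N K p].
Proof.
move=> hN [hp0 hp1] hmono hpos [[hq0 hq1] _] hbeta hq.
set a : R := (N.-1)%:R^-1.
have ha : 0 < a by rewrite /a invr_gt0 ltr0n; case: (N) hN => [|[|n]].
set s := fun k => p k `^ a.
have hs : forall k, (1 <= k <= K)%N -> 0 < s k by move=> k hk; exact: powR_gt0 (hpos k hk).
have hpm : forall k l, (1 <= k)%N -> (k <= l)%N -> (l <= K)%N -> p l <= p k.
  move=> k l hk; elim: l => [|l IH]; first by rewrite leqn0 => /eqP ->.
  rewrite leq_eqVlt => /orP[/eqP <- //|hkl] hl.
  apply: le_trans (IH hkl (ltnW hl)); apply: hmono; rewrite hl andbT.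
  exact: leq_trans hk hkl.
have hsm : forall k l, (1 <= k)%N -> (k <= l)%N -> (l <= K)%N -> s l <= s k.
  move=> k l hk hkl hl; apply: ge0_ler_powR; first exact: ltW.
  - by rewrite nnegrE; apply: ltW; apply: hpos; rewrite (leq_trans hk hkl) hl.
  - by rewrite nnegrE; apply: ltW; apply: hpos; rewrite hk (leq_trans hkl hl).
  exact: hpm.
have hpN : forall k, p k `^ (- a) = (s k)^-1 by move=> k; rewrite powRN.
have hq' : forall k, (1 <= k <= K)%N -> q k = Num.max 0 (1 - beta / s k).
  by move=> k hk; rewrite hq // hpN.
have hK : (1 <= K)%N.
  case: K hp1 {hp0 hmono hpos hq0 hq1 hq hq' hs hsm hpm} => // .
  by rewrite big_geq // => /eqP; rewrite eq_sym oner_eq0.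
have [i0 hi0 hqi0] : exists2 i0, (1 <= i0 <= K)%N & q i0 != 0.
  case: (pselect (exists2 i0, (1 <= i0 <= K)%N & q i0 != 0)) => // hne.
  exfalso; move/eqP: (oner_neq0 R); apply; rewrite -hq1.
  rewrite big_nat_cond big1 // => i /andP[/andP[hi1 hi2] _]; apply/eqP.
  apply: contraT => hqi; exfalso; apply: hne; exists i => //; by rewrite hi1 -ltnS hi2.
have [hm Pm ub] := @max_attain K (fun k => q k != 0) i0 hi0 hqi0.
rewrite -/(KN K q) in hm Pm ub.
set m := KN K q in hm Pm ub *.
have hmK : (m <= K)%N by case/andP: hm.
have hm1 : (1 <= m)%N by case/andP: hm.
have hlt : beta / s m < 1.
  rewrite ltNge; apply/negP => h; move: Pm; rewrite hq' // max_l ?subr_le0 // eqxx.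
  done.
have hbm : beta < s m by move: hlt; rewrite ltr_pdivrMr ?mul1r //; apply: hs.
have hqle : forall k, (1 <= k <= m)%N -> q k = 1 - beta / s k.
  move=> k /andP[hk1 hk2]; have hkK : (1 <= k <= K)%N by rewrite hk1 (leq_trans hk2) //; case/andP: hm.
  rewrite hq' // max_r // subr_ge0 ler_pdivrMr ?mul1r; last exact: hs.
  by apply: ltW (lt_le_trans hbm _); apply: hsm.
have hqgt : forall k, (m < k <= K)%N -> q k = 0 /\ s k <= beta.
  move=> k /andP[hmk hkK].
  have hk : (1 <= k <= K)%N by rewrite hkK andbT (leq_trans _ hmk) //; case/andP: hm.
  have hq0k : q k = 0.
    case: (eqVneq (q k) 0) => // hne; have := ub k hk hne; by rewrite leqNgt hmk.
  split => //.
  have := le_max (1 - beta / s k) 0 (1 - beta / s k); rewrite lexx orbT -hq' // hq0k.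
  by rewrite subr_le0 ler_pdivlMr ?mul1r //; apply: hs.
set S := \sum_(1 <= k < m.+1) (s k)^-1.
set T := \sum_(1 <= k < m) (s k)^-1.
have hST : S = T + (s m)^-1 by rewrite /S big_nat_recr.
have hT : 0 <= T.
  rewrite /T big_nat_cond; apply: sumr_ge0 => k /andP[/andP[hk1 hk2] _].
  rewrite invr_ge0 ltW //; apply: hs; rewrite hk1 /= ltnW // (leq_trans hk2) //.
have hsm0 : 0 < s m by apply: hs.
have hS : 0 < S by rewrite hST; apply: (le_lt_trans hT); rewrite ltrDl invr_gt0.
have hsum : \sum_(1 <= k < K.+1) q k = m%:R - beta * S.
  rewrite (big_cat_nat (n:=m.+1)) //=.
  rewrite [X in _ + X]big_nat_cond [X in _ + X]big1 ?addr0; last first.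
    by move=> k /andP[/andP[hk1 hk2] _]; case: (hqgt k) => //; rewrite hk1 -ltnS hk2.
  rewrite (eq_big_nat _ _ (F2 := fun k => 1 - beta * (s k)^-1)); last first.
    by move=> k /andP[hk1 hk2]; rewrite hqle // hk1 -ltnS hk2.
  by rewrite sumrB sumr_const_nat -mulr_sumr subn1.
have hmR : m%:R = beta * S + 1.
  by move: hq1; rewrite hsum => h; lra.
have hfr : forall k l, (1 <= k <= K)%N -> (1 <= l <= K)%N -> (p l / p k) `^ a = s l * (s k)^-1.
  move=> k l hk hl; rewrite powRM ?ltW ?invr_gt0 ?hpos //.
  by rewrite -(powR_inv1 (ltW (hpos k hk))) -powRrM mulN1r hpN.
split.
- under eq_bigr do rewrite hpN; rewrite -/S.
  by rewrite -subn1 natrB // hmR addrK mulfK // gt_eqF.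
- rewrite /pext; case: ifP => hm2.
    by case: (hqgt m.+1) => //; rewrite ltnSn hm2.
  by rewrite powR0 ?gt_eqF // ltW.
- exact: hbm.
symmetry; apply: max_char => //.
  rewrite /fN (eq_big_nat _ _ (F2 := fun k => 1 - s m * (s k)^-1)); last first.
    move=> k /andP[hk1 hk2]; rewrite hfr // ?hm1 ?hmK // hk1 /= ltnW // (leq_trans hk2) //.
  rewrite sumrB sumr_const_nat -mulr_sumr -/T natrB //.
  have hbT : beta * T <= s m * T by rewrite ler_wpM2r // ltW.
  move: hmR; rewrite hST mulrDr => hmR.
  lra.
move=> i hi hf; rewrite leqNgt; apply/negP => hmi; move: hf; apply/negP; rewrite -leNgt.
have hi1 : (1 <= i)%N by case/andP: hi.
have hiK : (i <= K)%N by case/andP: hi.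
rewrite /fN (big_cat_nat (n:=m.+1)) //=.
have hX : 0 <= \sum_(m.+1 <= k < i) (1 - (p i / p k) `^ a).
  rewrite big_nat_cond; apply: sumr_ge0 => k /andP[/andP[hk1 hk2] _].
  have hk : (1 <= k <= K)%N by rewrite (leq_trans _ hk1) // (leq_trans (ltnW hk2)).
  rewrite hfr // subr_ge0 -[leRHS](mulfV (negbT (gt_eqF (hs k hk)))) ler_wpM2r //.
    by rewrite invr_ge0 ltW // hs.
  by apply: hsm => //; [case/andP: hk | apply: ltnW].
rewrite (eq_big_nat _ _ (F2 := fun k => 1 - s i * (s k)^-1)); last first.
  move=> k /andP[hk1 hk2].
  have hk : (1 <= k <= K)%N by rewrite hk1 /= -ltnS (leq_trans hk2) // ltnS.
  by rewrite hfr.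
rewrite sumrB sumr_const_nat -mulr_sumr -/S subn1 /=.
have hsi : s i <= beta by case: (hqgt i) => //; rewrite hmi.
have hsS : s i * S <= beta * S by rewrite ler_wpM2r // ltW.
lra.
Qed.
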